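(* Let $\mathbf k=(k_1,\ldots,k_r)\in\mathbb N^r$, $\mathbf x=(x_1,\ldots,x_r)$ with $|x_j|\le1$, $l\in\mathbb N_0$ and $n\in\mathbb N$. Then \[ \sum_{n\ge n_1\ge n_2\ge\cdots\ge n_r>0}\prod_{j=1}^r\frac{x_j^{n_j+l}}{(n_j+l)^{k_j}}=(-1)^r\sum_{j=0}^r(-1)^j\,\zeta^\star_{n+l}(k_1,\ldots,k_j;x_1,\ldots,x_j)\,\zeta_l(k_r,k_{r-1},\ldots,k_{j+1};x_r,x_{r-1},\ldots,x_{j+1}). \]
   Context: $\zeta_n(\mathbf k;\mathbf x)=\sum_{n\ge n_1>\cdots>n_r\ge1}\prod_i x_i^{n_i}/n_i^{k_i}$ and $\zeta^\star_n(\mathbf k;\mathbf x)=\sum_{n\ge n_1\ge\cdots\ge n_r\ge1}\prod_i x_i^{n_i}/n_i^{k_i}$ for $n\in\mathbb N_0$; both equal $1$ for the empty index, and a sum over an empty range is $0$. *)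

(* Defs.v *)
(* Scalars x_j live in an arbitrary numClosedFieldType C
   (e.g. algC, or complex R for R : rcfType), which covers the complex case. *)
From HB Require Import structures.
From mathcomp Require Import all_boot all_order all_algebra.
Set Implicit Arguments. Unset Strict Implicit. Unset Printing Implicit Defensive.
Import Order.TTheory GRing.Theory Num.Theory.
Local Open Scope ring_scope.

(* An index/argument pair list  [:: (k_1,x_1); ...; (k_r,x_r)]. *)

(* zeta_n(k;x) = sum_{n >= n_1 > ... > n_r >= 1} prod x_i^{n_i}/n_i^{k_i} *)
Fixpoint mzeta {C : numFieldType} (n : nat) (s : seq (nat * C)) : C :=
  match s with
  | [::] => 1
  | (k, x) :: s' =>
      \sum_(1 <= m < n.+1) (x ^+ m / (m%:R) ^+ k) * mzeta m.-1 s'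
  end.

(* zeta^star_n(k;x) = sum_{n >= n_1 >= ... >= n_r >= 1} prod x_i^{n_i}/n_i^{k_i} *)
Fixpoint mzetastar {C : numFieldType} (n : nat) (s : seq (nat * C)) : C :=
  match s with
  | [::] => 1
  | (k, x) :: s' =>
      \sum_(1 <= m < n.+1) (x ^+ m / (m%:R) ^+ k) * mzetastar m s'
  end.

Fixpoint shifted_star_sum {C : numFieldType} (l n : nat) (s : seq (nat * C)) : C :=
  match s with
  | [::] => 1
  | (k, x) :: s' =>
      \sum_(1 <= m < n.+1)
        (x ^+ (m + l) / ((m + l)%:R) ^+ k) * shifted_star_sum l m s'
  end.

(* Main.v *)
Require Import Defs.
From HB Require Import structures.
From mathcomp Require Import all_boot all_order all_algebra.
From mathcomp Require Import ring.
Import Order.TTheory GRing.Theory Num.Theory.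
Local Open Scope ring_scope.

Fixpoint Gs {C : numFieldType} (L N : nat) (s : seq (nat * C)) : C :=
  match s with
  | [::] => 1
  | (k, x) :: s' =>
      \sum_(L.+1 <= m < N.+1) (x ^+ m / (m%:R) ^+ k) * Gs L m s'
  end.

Lemma tri (R : nmodType) a b (F : nat -> nat -> R) :
  \sum_(a <= i < b) \sum_(a <= j < i.+1) F i j =
  \sum_(a <= j < b) \sum_(j <= i < b) F i j.
Proof.
transitivity (\sum_(a <= i < b) \sum_(a <= j < b | (j < i.+1)%N) F i j).
  apply: eq_big_nat => i /andP[_ hi].
  by rewrite (big_nat_widen _ _ _ _ _ hi).
rewrite (exchange_big_dep_nat predT) //.
apply: eq_big_nat => j /andP[hj _].
rewrite (@big_nat_widenl _ _ _ j a) //; apply: eq_bigl => i; rewrite ltnS.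
Qed.

Lemma shifted_G {C : numFieldType} (s : seq (nat * C)) l n :
  shifted_star_sum l n s = Gs l (n + l) s.
Proof.
elim: s n => [//|[k x] s IH] n /=.
rewrite -(add1n l) big_addn -addSn addnK.
by apply: eq_bigr => m _; rewrite IH.
Qed.

Lemma zstar_G {C : numFieldType} (s : seq (nat * C)) N :
  mzetastar N s = Gs 0 N s.
Proof.
elim: s N => [//|[k x] s IH] N /=.
by apply: eq_bigr => m _; rewrite IH.
Qed.

Lemma back_G {C : numFieldType} (s : seq (nat * C)) k x L N :
  Gs L N (rcons s (k, x)) =
  \sum_(L.+1 <= m < N.+1) (x ^+ m / (m%:R) ^+ k) * Gs m.-1 N s.
Proof.
elim: s N => [|[k' x'] s IH] N /=.
  by apply: eq_bigr => m _; rewrite !mulr1.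
under eq_bigr do rewrite IH big_distrr /=.
rewrite tri.
apply: eq_big_nat => m /andP[hm _].
have hm1 : m.-1.+1 = m by rewrite prednK // (leq_trans _ hm).
rewrite hm1 big_distrr /=.
by apply: eq_bigr => i _; rewrite mulrCA.
Qed.

Lemma key {C : numFieldType} (s : seq (nat * C)) L N :
  (L <= N)%N ->
  Gs L N s = \sum_(j < (size s).+1)
     (-1) ^+ (size s - j) * mzetastar N (take j s) * mzeta L (rev (drop j s)).
Proof.
elim/last_ind: s L => [|s [k x] IH] L hLN.
  by rewrite big_ord1 /= expr0 !mulr1.
rewrite size_rcons big_ord_recr /= subnn expr0 mul1r.
rewrite take_oversize ?size_rcons // drop_oversize ?size_rcons // /=.
rewrite mulr1 zstar_G back_G.
have -> : \sum_(i < (size s).+1)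
   (-1) ^+ ((size s).+1 - widen_ord (leqnSn (size s).+1) i) *
   mzetastar N (take (widen_ord (leqnSn (size s).+1) i) (rcons s (k, x))) *
   mzeta L (rev (drop (widen_ord (leqnSn (size s).+1) i) (rcons s (k, x))))
  = - \sum_(1 <= m < L.+1) (x ^+ m / (m%:R) ^+ k) * Gs m.-1 N s.
  transitivity (- \sum_(i < (size s).+1) \sum_(1 <= m < L.+1)
     (x ^+ m / (m%:R) ^+ k) * ((-1) ^+ (size s - i) * mzetastar N (take i s)
        * mzeta m.-1 (rev (drop i s)))).
    rewrite -sumrN; apply: eq_bigr => i _ /=.
    have hi : (i <= size s)%N by rewrite -ltnS.
    rewrite -cats1 takel_cat // drop_cat.
    move: hi; rewrite leq_eqVlt => /orP[/eqP hi|hi].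
      rewrite hi ltnn subnn drop0 /= drop_oversize // /=.
      rewrite subSnn expr1 expr0 mul1r.
      rewrite big_distrr -sumrN; apply: eq_bigr => m _.
      by rewrite /=; ring.
    rewrite hi rev_cat /= subSn ?(ltnW hi) // exprS.
    rewrite big_distrr -sumrN; apply: eq_bigr => m _.
    by rewrite /=; ring.
  congr (- _); rewrite exchange_big /=.
  apply: eq_big_nat => m /andP[hm1 hm2].
  rewrite -big_distrr /= IH //.
  by apply: leq_trans (leq_pred m) (leq_trans _ hLN); rewrite -ltnS.
rewrite back_G [X in _ = _ + X](big_cat_nat _ (n := L.+1)) //=.
by rewrite addKr.

Qed.

Theorem mainTheorem13 (C : numClosedFieldType) (s : seq (nat * C)) (l n : nat) :
  all (fun p => (0 < p.1)%N) s ->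
  all (fun p => `|p.2| <= 1) s ->
  (0 < n)%N ->
  shifted_star_sum l n s =
  (-1) ^+ size s *
  \sum_(j < (size s).+1)
     (-1) ^+ j * mzetastar (n + l) (take j s) * mzeta l (rev (drop j s)).
Proof.
move=> _ _ _.
rewrite shifted_G key ?leq_addl // big_distrr.
apply: eq_bigr => j _.
have hj : (j <= size s)%N by rewrite -ltnS.
have -> : (-1) ^+ size s = (-1) ^+ (size s - j) * (-1) ^+ j :> C.
  by rewrite -exprD subnK.
have h1 : (-1) ^+ j * (-1) ^+ j = 1 :> C by rewrite -exprMn mulrNN mulr1 expr1n.
set a := (-1) ^+ j in h1 *.
set b := (-1) ^+ (size s - j).
change (b * mzetastar (n+l) (take j s) * mzeta l (rev (drop j s)) = (b * a) * (a * mzetastar (n+l) (take j s) * mzeta l (rev (drop j s)))).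
by rewrite !mulrA -(mulrA b a a) h1 mulr1.
Qed.
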